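(* Let $n=2^r$, $a\in\mathbb{Z}_{2n}^*$ and $b\in 2\mathbb{Z}_{2n}$. Then $\mathrm{SD}(n,R,T)\cong\mathrm{SD}(n,aR,b+aT)$ and $\mathrm{PSD}(n,R,T)\cong\mathrm{PSD}(n,R,n+T)$.
   Context: For a group $G$ and inverse-closed $S\subseteq G\setminus\{1\}$, $\mathrm{Cay}(G,S)$ has vertex set $G$, with $g,h$ adjacent iff $g^{-1}h\in S$. $\mathrm{SD}_n=\langle\rho,\tau\mid\rho^{2n}=\tau^2=1,\ \tau\rho\tau=\rho^{n-1}\rangle$ and $\mathrm{PSD}_n=\langle\rho,\tau\mid\rho^{2n}=\tau^2=1,\ \tau\rho\tau=\rho^{n+1}\rangle$. For $R=-R\subseteq\mathbb{Z}_{2n}\setminus\{0\}$ and $T=(n+1)T\subseteq\mathbb{Z}_{2n}$, $\mathrm{SD}(n,R,T)=\mathrm{Cay}(\mathrm{SD}_n,\{\rho^i:i\in R\}\cup\{\rho^j\tau:j\in T\})$; for $R=-R\subseteq\mathbb{Z}_{2n}\setminus\{0\}$ and $T=(n-1)T\subseteq\mathbb{Z}_{2n}$, $\mathrm{PSD}(n,R,T)=\mathrm{Cay}(\mathrm{PSD}_n,\{\rho^i:i\in R\}\cup\{\rho^j\tau:j\in T\})$. Here $cI=\{cx:x\in I\}$ and $c+I=\{c+x:x\in I\}$ for $I\subseteq\mathbb{Z}_{2n}$, and $\mathbb{Z}_{2n}^*$ is the unit group of $\mathbb{Z}_{2n}$. *)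

(* Defs.v *)
From HB Require Import structures.
From mathcomp Require Import all_boot all_algebra.
Set Implicit Arguments. Unset Strict Implicit. Unset Printing Implicit Defensive.
Import GRing.Theory.
Local Open Scope ring_scope.

(* Concrete model of SD_n / PSD_n: the element rho^i tau^e is the pair (i, e)
   with i : 'Z_(2n) and e : bool.  Using tau rho^j tau = rho^(m j) with
   m = n-1 (SD_n) or m = n+1 (PSD_n):
     (rho^i tau^e)(rho^j tau^f) = rho^(i + m^e j) tau^(e+f). *)
Definition dmul (n : nat) (m : 'Z_(2 * n)) (x y : 'Z_(2 * n) * bool)
  : 'Z_(2 * n) * bool :=
  (x.1 + (if x.2 then m * y.1 else y.1), x.2 (+) y.2).

(* inverse: (rho^i)^-1 = rho^-i, (rho^i tau)^-1 = tau rho^-i = rho^(-m i) tau *)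
Definition dinv (n : nat) (m : 'Z_(2 * n)) (x : 'Z_(2 * n) * bool)
  : 'Z_(2 * n) * bool :=
  if x.2 then (- (m * x.1), true) else (- x.1, false).

Definition SD_mult (n : nat) : 'Z_(2 * n) := (n.-1)%:R.
Definition PSD_mult (n : nat) : 'Z_(2 * n) := (n.+1)%:R.

Definition cay_set (n : nat) (R T : {set 'Z_(2 * n)}) : {set 'Z_(2 * n) * bool} :=
  [set (i, false) | i in R] :|: [set (j, true) | j in T].

Definition cay_adj (n : nat) (m : 'Z_(2 * n)) (S : {set 'Z_(2 * n) * bool})
  : rel ('Z_(2 * n) * bool) :=
  fun g h => dmul m (dinv m g) h \in S.

Definition SDgraph (n : nat) (R T : {set 'Z_(2 * n)}) :=
  cay_adj (SD_mult n) (cay_set R T).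
Definition PSDgraph (n : nat) (R T : {set 'Z_(2 * n)}) :=
  cay_adj (PSD_mult n) (cay_set R T).

Definition graph_iso (V : finType) (e1 e2 : rel V) : Prop :=
  exists f : V -> V, bijective f /\ forall x y, e1 x y = e2 (f x) (f y).

Definition scale_set (n : nat) (c : 'Z_(2 * n)) (I : {set 'Z_(2 * n)}) :=
  [set c * x | x in I].
Definition shift_set (n : nat) (c : 'Z_(2 * n)) (I : {set 'Z_(2 * n)}) :=
  [set c + x | x in I].
Definition neg_set (n : nat) (I : {set 'Z_(2 * n)}) := [set - x | x in I].

(* Main.v *)
Require Import Defs.
From HB Require Import structures.
From mathcomp Require Import all_boot all_algebra.
From mathcomp Require Import ring.
Import GRing.Theory.
Set Implicit Arguments. Unset Strict Implicit.
Local Open Scope ring_scope.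

Definition Fm (n : nat) (a b : 'Z_(2 * n)) (x : 'Z_(2 * n) * bool) : 'Z_(2 * n) * bool :=
  (a * x.1 + (if x.2 then b else 0), x.2).

Lemma Fm_hom (n : nat) (m a b : 'Z_(2 * n)) x y :
  (m + 1) * b = 0 ->
  dmul m (dinv m (Fm a b x)) (Fm a b y) = Fm a b (dmul m (dinv m x) y).
Proof.
move=> hb; case: x => i e; case: y => j f.
rewrite /dmul /dinv /Fm /=.
case: e; case: f => /=; congr pair.
- by rewrite !mulrDr !addr0; ring.
- have hb' : m * b = - b.
    by apply/eqP; rewrite -addr_eq0 -hb; apply/eqP; ring.
  rewrite !addr0 !mulrDr hb'; ring.
- by rewrite !addr0; ring.
- by rewrite !addr0; ring.
Qed.

Lemma Fm_bij (n : nat) (a b : 'Z_(2 * n)) : a \is a GRing.unit -> bijective (Fm a b).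
Proof.
move=> ua.
exists (fun x : 'Z_(2*n) * bool => (a^-1 * (x.1 - if x.2 then b else 0), x.2)).
- case=> i e; rewrite /Fm /=; congr pair.
  by rewrite addrK mulrA mulVr // mul1r.
- case=> i e; rewrite /Fm /=; congr pair.
  by rewrite mulrA mulrV // mul1r subrK.
Qed.

Lemma Fm_mem (n : nat) (a b : 'Z_(2 * n)) (R T R' T' : {set 'Z_(2 * n)}) x :
  (forall i, (a * i \in R') = (i \in R)) ->
  (forall j, (a * j + b \in T') = (j \in T)) ->
  (Fm a b x \in cay_set R' T') = (x \in cay_set R T).
Proof.
move=> hR hT; case: x => i e; rewrite /Fm /cay_set /= !inE.
have F1 : forall (A : {set 'Z_(2*n)}) k c, ((k, c) \in [set (j, false) | j in A]) = ~~ c && (k \in A).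
  move=> A k c; apply/imsetP/idP.
  - by case=> j jA [-> ->].
  - by case/andP; case: c => // _ kA; exists k.
have F2 : forall (A : {set 'Z_(2*n)}) k c, ((k, c) \in [set (j, true) | j in A]) = c && (k \in A).
  move=> A k c; apply/imsetP/idP.
  - by case=> j jA [-> ->] /=.
  - by case/andP; case: c => // _ kA; exists k.
rewrite !F1 !F2; case: e => /=.
- by rewrite hT.
- by rewrite addr0 hR.
Qed.

Lemma iso_gen (n : nat) (m a b : 'Z_(2 * n)) (R T R' T' : {set 'Z_(2 * n)}) :
  a \is a GRing.unit -> (m + 1) * b = 0 ->
  (forall i, (a * i \in R') = (i \in R)) ->
  (forall j, (a * j + b \in T') = (j \in T)) ->
  graph_iso (cay_adj m (cay_set R T)) (cay_adj m (cay_set R' T')).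
Proof.
move=> ua hb hR hT; exists (Fm a b); split; first exact: Fm_bij.
move=> x y; rewrite /cay_adj Fm_hom //; symmetry; exact: (Fm_mem _ hR hT).
Qed.

Theorem lemma3p4 (r : nat) (hr : (1 <= r)%N)
    (R T : {set 'Z_(2 * 2 ^ r)}) (a b : 'Z_(2 * 2 ^ r)) :
  (* SD part *)
  ((neg_set R = R) -> (0 \notin R) ->
   (scale_set ((2 ^ r).+1)%:R T = T) ->
   (a \is a GRing.unit) -> (exists c : 'Z_(2 * 2 ^ r), b = 2%:R * c) ->
   graph_iso (SDgraph R T) (SDgraph (scale_set a R) (shift_set b (scale_set a T))))
  /\
  (* PSD part *)
  ((neg_set R = R) -> (0 \notin R) ->
   (scale_set ((2 ^ r).-1)%:R T = T) ->
   graph_iso (PSDgraph R T) (PSDgraph R (shift_set (2 ^ r)%:R T))).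
Proof.
have h2n : (2 * 2 ^ r)%:R = 0 :> 'Z_(2 * 2 ^ r).
  by apply: pchar_Zp; rewrite -expnS (ltn_exp2l 0).
have npos : (0 < 2 ^ r)%N by rewrite expn_gt0.
split.
- move=> _ _ _ ua [c ->].
  apply: (iso_gen (a := a) (b := 2%:R * c)) => //.
  + rewrite /SD_mult natr1 prednK //. by rewrite mulrA -natrM [(_ * 2)%N]mulnC h2n mul0r.
  + move=> i; rewrite /scale_set; apply/imsetP/idP.
    * by case=> j jR /(mulrI ua) ->.
    * by move=> iR; exists i.
  + move=> j; rewrite /shift_set /scale_set; apply/imsetP/idP.
    * case=> k /imsetP [l lT ->] /eqP; rewrite addrC (inj_eq (@addrI _ _)) => /eqP.
      by move/(mulrI ua) ->.
    * by move=> jT; exists (a * j); [apply/imsetP; exists j|rewrite addrC].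
- move=> _ _ _.
  apply: (iso_gen (a := 1) (b := (2 ^ r)%:R)) => //.
  + exact: unitr1.
  + rewrite /PSD_mult natr1 -natrM.
    have e : (2 ^ r = 2 * 2 ^ r.-1)%N by rewrite -expnS prednK.
    have -> : ((2 ^ r).+2 * 2 ^ r = (2 * 2 ^ r) * (2 ^ r.-1 + 1))%N.
      by rewrite e; set k := (2 ^ r.-1)%N; ring.
    by rewrite natrM h2n mul0r.
  + by move=> i; rewrite mul1r.
  + move=> j; rewrite mul1r /shift_set; apply/imsetP/idP.
    * by case=> k kT /eqP; rewrite addrC (inj_eq (@addrI _ _)) => /eqP ->.
    * by move=> jT; exists j => //; rewrite addrC.
Qed.
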